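(* Let $\mathcal{A}$ be a finite abelian group with $|\mathcal{A}|\ge 3$. Let $M_{10}(p_1,p_2)$ be the graph consisting of the $4$-cycle $v_1v_2v_3v_4v_1$ and the triangle $v_1v_5v_6$ (sharing the vertex $v_1$), together with $p_1\ge0$ pendant vertices adjacent to $v_1$ and $p_2\ge 0$ pendant vertices adjacent to $v_2$. Then $M_{10}(p_1,p_2)$ is $\mathcal{A}$-vertex magic if and only if $p_1=p_2=0$ and $|\mathcal{A}|$ is even.
   Context: A map $\ell:V(G)\to\mathcal{A}\setminus\{0\}$ is an $\mathcal{A}$-vertex magic labeling if there is $\mu\in\mathcal{A}$ with $\sum_{u\in N(v)}\ell(u)=\mu$ for every vertex $v$; $G$ is $\mathcal{A}$-vertex magic if such a labeling exists. A pendant vertex has degree $1$. *)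

(* Defs.v *)
From HB Require Import structures.
From mathcomp Require Import all_boot all_order all_algebra.
Set Implicit Arguments. Unset Strict Implicit. Unset Printing Implicit Defensive.
Import GRing.Theory.
Local Open Scope ring_scope.

Definition vertex_magic_labeling (T : finType) (adj : rel T) (A : zmodType)
  (l : T -> A) (mu : A) : Prop :=
  (forall v, l v != 0) /\ (forall v, \sum_(u | adj v u) l u = mu).

Definition vertex_magic (T : finType) (adj : rel T) (A : zmodType) : Prop :=
  exists (l : T -> A) (mu : A), vertex_magic_labeling adj l mu.

(* Vertex indexing of M10(p1,p2) on 'I_(6 + p1 + p2):
   0..5  = v1..v6,
   6 .. 6+p1-1        = pendant vertices adjacent to v1,
   6+p1 .. 6+p1+p2-1  = pendant vertices adjacent to v2. *)
Definition M10_edge_nat (p1 p2 : nat) (i j : nat) : bool :=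
  [|| ((i == 0) && (j == 1))%N, ((i == 1) && (j == 2))%N, ((i == 2) && (j == 3))%N,
      ((i == 3) && (j == 0))%N, ((i == 0) && (j == 4))%N, ((i == 4) && (j == 5))%N,
      ((i == 5) && (j == 0))%N,
      [&& i == 0, 6 <= j & j < 6 + p1]%N
    | [&& i == 1, 6 + p1 <= j & j < 6 + p1 + p2]%N].

Definition M10_adj (p1 p2 : nat) : rel 'I_(6 + p1 + p2) :=
  fun i j => M10_edge_nat p1 p2 i j || M10_edge_nat p1 p2 j i.

(* Main.v *)
Require Import Defs.
From HB Require Import structures.
From mathcomp Require Import all_boot all_order all_algebra zify.
From mathcomp Require Import fingroup cyclic pgroup finalg.
Import GRing.Theory FinRing.Theory.

Lemma even_of_inv2 (A : finZmodType) (x : A) : (x != 0)%R -> (x + x = 0)%R -> ~~ odd #|A|.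
Proof.
move=> nx0 hx.
have o2 : #[x]%g = 2.
  have d : (#[x]%g %| 2)%N by rewrite order_dvdn zmodXgE mulr2n hx zmod1gE.
  have h1 := @dvdn_leq _ 2 isT d.
  have h0 := order_gt0 (x : A).
  have ne1 : (#[x]%g != 1)%N by rewrite order_eq1.
  by move: h0 h1 ne1; case: (#[x]%g) => [|[|[|]]].
have : (2 %| #|[set: A]|)%N by rewrite -o2 (order_dvdG (in_setT x)).
by rewrite cardsT dvdn2.
Qed.

Lemma inv2_of_even (A : finZmodType) : ~~ odd #|A| -> exists x : A, (x != 0)%R /\ (x + x = 0)%R.
Proof.
move=> ev.
have h2 : (2 %| #|[set: A]%G|)%N by rewrite /= cardsT dvdn2.
have [x _ ox] := @Cauchy A 2 [set: A]%G isT h2.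
exists x; split.
  by rewrite -[(x == 0)%R](order_eq1 (x : A)) ox.
by apply/eqP; rewrite -[_ == _](order_dvdn (x : A) 2) ox.
Qed.

Local Open Scope ring_scope.

Lemma ltS k p1 p2 : (k < 6)%N -> (k < 6 + p1 + p2)%N.
Proof. lia. Qed.

Definition vo {p1 p2 k} (h : (k < 6 + p1 + p2)%N) : 'I_(6 + p1 + p2) := Ordinal h.

Lemma sumS n (A : zmodType) (l : 'I_n -> A) (P : pred 'I_n) (s : seq 'I_n) :
  uniq s -> P =1 (fun u => u \in s) -> \sum_(u | P u) l u = \sum_(u <- s) l u.
Proof. by move=> us hP; rewrite big_uniq //; apply: eq_bigl. Qed.

Ltac adj_tac :=
  case=> [[|[|[|[|[|[|?]]]]]] ?]; rewrite /M10_adj /M10_edge_nat /= ?inE -?val_eqE /=; lia.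

Theorem proposition4p9 (A : finZmodType) (p1 p2 : nat) :
  (3 <= #|A|)%N ->
  (vertex_magic (@M10_adj p1 p2) A <->
   (p1 = 0%N /\ p2 = 0%N /\ ~~ odd #|A|)).
Proof.
move=> _; split.
- move=> [l [mu [hnz hs]]].
  pose v (k : nat) (h : (k < 6)%N) := vo (@ltS k p1 p2 h).
  have e4 : l (v 0%N isT) + l (v 5%N isT) = mu.
    rewrite -(hs (v 4%N isT)) (@sumS _ _ _ _ [:: v 0%N isT; v 5%N isT]) //.
      by rewrite big_cons big_seq1.
    adj_tac.
  have e2 : l (v 1%N isT) + l (v 3%N isT) = mu.
    rewrite -(hs (v 2%N isT)) (@sumS _ _ _ _ [:: v 1%N isT; v 3%N isT]) //.
      by rewrite big_cons big_seq1.
    adj_tac.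
  have p10 : p1 = 0%N.
    case: (posnP p1) => [//|p1pos]; exfalso.
    have hw : (6 < 6 + p1 + p2)%N by lia.
    have e1 : l (v 0%N isT) = mu.
      rewrite -(hs (vo hw)) (@sumS _ _ _ _ [:: v 0%N isT]) //.
        by rewrite big_seq1.
      adj_tac.
    move: e4; rewrite -e1 -{2}[l (v 0%N isT)]addr0 => /addrI h5.
    by move: (hnz (v 5%N isT)); rewrite h5 eqxx.
  have p20 : p2 = 0%N.
    case: (posnP p2) => [//|p2pos]; exfalso.
    have hw : (6 + p1 < 6 + p1 + p2)%N by lia.
    have e1 : l (v 1%N isT) = mu.
      rewrite -(hs (vo hw)) (@sumS _ _ _ _ [:: v 1%N isT]) //.
        by rewrite big_seq1.
      adj_tac.
    move: e2; rewrite -e1 -{2}[l (v 1%N isT)]addr0 => /addrI h5.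
    by move: (hnz (v 3%N isT)); rewrite h5 eqxx.
  have e5 : l (v 0%N isT) + l (v 4%N isT) = mu.
    rewrite -(hs (v 5%N isT)) (@sumS _ _ _ _ [:: v 0%N isT; v 4%N isT]) //.
      by rewrite big_cons big_seq1.
    adj_tac.
  have e0 : l (v 1%N isT) + l (v 3%N isT) + (l (v 4%N isT) + l (v 5%N isT)) = mu.
    rewrite -(hs (v 0%N isT)) (@sumS _ _ _ _ [:: v 1%N isT; v 3%N isT; v 4%N isT; v 5%N isT]) //.
      by rewrite !big_cons big_nil addr0 !addrA.
    adj_tac.
  do 2!split => //.
  apply: (@even_of_inv2 A (l (v 5%N isT))); first exact: hnz.
  have h45 : l (v 4%N isT) = l (v 5%N isT).
    by apply: (@addrI _ (l (v 0%N isT))); rewrite e4 e5.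
  move: e0; rewrite e2 -{2}[mu]addr0 => /addrI.
  by rewrite h45.
- move=> [-> [-> ev]].
  have [x [nx hx]] := @inv2_of_even A ev.
  exists (fun _ => x), 0; split => // w.
  case: w => [[|[|[|[|[|[|k]]]]]] hk] //;
  rewrite big_mkcond /= !big_ord_recl big_ord0 /= ?addr0 ?add0r ?addrA ?hx ?add0r //.
Qed.
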